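(* Let $\{x^k\}$ be generated by Algorithm IRG with the backtracking stepsize rule. Assume $\inf_k f(x^k)>-\infty$ and $\rho_k\to0$ as $k\to\infty$. Then: (i) $\varepsilon_k\downarrow0$ and $r_k\downarrow0$; (ii) every accumulation point of $\{x^k\}$ is a stationary point of $f$; (iii) if $\{x^k\}$ is bounded, its set of accumulation points is nonempty, compact and connected; (iv) if $\{x^k\}$ has an isolated accumulation point, then the whole sequence $\{x^k\}$ converges to it.
   Context: Algorithm IRG (general inexact reduced gradient framework). Let $f:\mathbb R^n\to\mathbb R$ be continuously differentiable. Parameters: initial point $x^1\in\mathbb R^n$, initial radii $\varepsilon_1>0$, $r_1>0$, reduction factors $\mu,\theta\in(0,1)$, and a sequence $\{\rho_k\}$ of positive numbers. For $k=1,2,\dots$: (1) choose $g^k\in\mathbb R^n$ with $\|g^k-\nabla f(x^k)\|\le\min\{\varepsilon_k,\rho_k\}$; (2) if $\|g^k\|\le r_k+\varepsilon_k$, set $r_{k+1}=\mu r_k$, $\varepsilon_{k+1}=\theta\varepsilon_k$, $d^k=0$; otherwise set $r_{k+1}=r_k$, $\varepsilon_{k+1}=\varepsilon_k$ and $d^k=-\frac{\|g^k\|-\varepsilon_k}{\|g^k\|}g^k$; (3) choose a stepsize $t_k>0$ by some rule; (4) set $x^{k+1}=x^k+t_kd^k$. Backtracking stepsize rule: fix $\beta,\gamma,\tau\in(0,1)$; if $d^k=0$ set $t_k=\tau$; otherwise $t_k=\max\{t\in\{1,\gamma,\gamma^2,\dots\}: f(x^k+td^k)\le f(x^k)-\beta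 t\|d^k\|^2\}$. *)

(* Defs.v *)
From HB Require Import structures.
From mathcomp Require Import all_boot all_order all_algebra.
From mathcomp Require Import all_classical all_reals all_analysis.
Set Implicit Arguments. Unset Strict Implicit. Unset Printing Implicit Defensive.
Import Order.TTheory GRing.Theory Num.Theory.
Import numFieldNormedType.Exports.
Local Open Scope classical_set_scope.
Local Open Scope ring_scope.

Definition enorm {R : realType} {n : nat} (v : 'rV[R]_n) : R :=
  Num.sqrt (\sum_(i < n) v ord0 i ^+ 2).

Definition grad {R : realType} {n : nat} (f : 'rV[R]_n -> R) (x : 'rV[R]_n)
  : 'rV[R]_n := \row_i derive f x (delta_mx ord0 i).

Definition C1 {R : realType} {n : nat} (f : 'rV[R]_n -> R) : Prop :=
  (forall x, differentiable f x) /\ continuous (grad f).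

Definition accum_pt {R : realType} {n : nat} (x : nat -> 'rV[R]_n) (xs : 'rV[R]_n)
  : Prop :=
  forall e : R, 0 < e -> forall N : nat, exists k : nat, (N <= k)%N /\ enorm (x k - xs) < e.

Definition accum_set {R : realType} {n : nat} (x : nat -> 'rV[R]_n)
  : set 'rV[R]_n := [set xs | accum_pt x xs].

Definition armijo {R : realType} {n : nat} (f : 'rV[R]_n -> R) (beta : R)
  (xk dk : 'rV[R]_n) (t : R) : Prop :=
  f (xk + t *: dk) <= f xk - beta * t * enorm dk ^+ 2.

(* Algorithm IRG with the backtracking stepsize rule (iterations indexed from 0) *)
Definition IRG_backtracking {R : realType} {n : nat} (f : 'rV[R]_n -> R)
  (mu theta beta gamma tau : R) (rho : nat -> R)
  (x g d : nat -> 'rV[R]_n) (eps r t : nat -> R) : Prop :=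
  [/\ 0 < eps 0%N /\ 0 < r 0%N,
      (0 < mu < 1) /\ (0 < theta < 1),
      [/\ 0 < beta < 1, 0 < gamma < 1 & 0 < tau < 1],
      forall k, 0 < rho k &
      forall k : nat,
        [/\ enorm (g k - grad f (x k)) <= Order.min (eps k) (rho k),
            (if enorm (g k) <= r k + eps k then
               [/\ r k.+1 = mu * r k, eps k.+1 = theta * eps k & d k = 0]
             else
               [/\ r k.+1 = r k, eps k.+1 = eps k &
                   d k = - ((enorm (g k) - eps k) / enorm (g k)) *: g k]),
            (if d k == 0 then t k = tau
             else exists j : nat,
               [/\ t k = gamma ^+ j, armijo f beta (x k) (d k) (gamma ^+ j) &
                   forall i : nat, (i < j)%N -> ~ armijo f beta (x k) (d k) (gamma ^+ i)])
          & x k.+1 = x k + t k *: d k]].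

(* Main.v *)
Require Import Defs.
From HB Require Import structures.
From mathcomp Require Import all_boot all_order all_algebra.
From mathcomp Require Import all_classical all_reals all_analysis.
From mathcomp Require Import ring lra.
From Stdlib Require Import Classical.
Import Order.TTheory GRing.Theory Num.Theory.
Import numFieldNormedType.Exports.
Local Open Scope classical_set_scope.
Local Open Scope ring_scope.
Section Norms.
Context {R : realType} {n : nat}.
Implicit Types u v w : 'rV[R]_n.

Definition dot u v : R := \sum_(i < n) u ord0 i * v ord0 i.

Lemma dotC u v : dot u v = dot v u.
Proof. by apply: eq_bigr => i _; rewrite mulrC. Qed.

Lemma dotDl u v w : dot (u + v) w = dot u w + dot v w.
Proof. by rewrite /dot -big_split; apply: eq_bigr => i _; rewrite mxE mulrDl. Qed.

Lemma dotZl a u v : dot (a *: u) v = a * dot u v.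
Proof. by rewrite /dot mulr_sumr; apply: eq_bigr => i _; rewrite mxE mulrA. Qed.

Lemma dotNl u v : dot (- u) v = - dot u v.
Proof. by rewrite -scaleN1r dotZl mulN1r. Qed.

Lemma dotBl u v w : dot (u - v) w = dot u w - dot v w.
Proof. by rewrite dotDl dotNl. Qed.

Lemma dotDr u v w : dot w (u + v) = dot w u + dot w v.
Proof. by rewrite dotC dotDl !(dotC w). Qed.

Lemma dotZr a u v : dot v (a *: u) = a * dot v u.
Proof. by rewrite dotC dotZl dotC. Qed.

Lemma dotBr u v w : dot w (u - v) = dot w u - dot w v.
Proof. by rewrite dotC dotBl !(dotC w). Qed.

Lemma dot_ge0 u : 0 <= dot u u.
Proof. by apply: sumr_ge0 => i _; rewrite -expr2 sqr_ge0. Qed.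

Lemma dot0_eq u : dot u u = 0 -> u = 0.
Proof.
move=> H; apply/rowP => i; rewrite mxE.
have := @psumr_eq0P R _ xpredT (fun i => u ord0 i * u ord0 i).
move=> /(_ (fun i _ => ltac:(by rewrite -expr2 sqr_ge0)) H i isT).
by move/eqP; rewrite mulf_eq0 orbb => /eqP.
Qed.

Lemma enormE u : enorm u = Num.sqrt (dot u u).
Proof. by rewrite /enorm /dot; congr Num.sqrt; apply: eq_bigr => i _; rewrite expr2. Qed.

Lemma enorm_ge0 u : 0 <= enorm u.
Proof. by rewrite enormE sqrtr_ge0. Qed.

Lemma enorm_sq u : enorm u ^+ 2 = dot u u.
Proof. by rewrite enormE sqr_sqrtr // dot_ge0. Qed.

Lemma enorm0 : enorm (0 : 'rV[R]_n) = 0.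
Proof. by rewrite enormE /dot big1 ?sqrtr0 // => i _; rewrite mxE mul0r. Qed.

Lemma enorm_eq0 u : enorm u = 0 -> u = 0.
Proof. by move=> H; apply: dot0_eq; rewrite -enorm_sq H expr0n. Qed.

Lemma enormZ a u : enorm (a *: u) = `|a| * enorm u.
Proof.
rewrite !enormE dotZl dotZr mulrA -expr2 sqrtrM ?sqr_ge0 //.
by rewrite sqrtr_sqr.
Qed.

Lemma enormN u : enorm (- u) = enorm u.
Proof. by rewrite -scaleN1r enormZ normrN normr1 mul1r. Qed.

Lemma enormB u v : enorm (u - v) = enorm (v - u).
Proof. by rewrite -enormN opprB. Qed.

Lemma CS_sq u v : dot u v ^+ 2 <= dot u u * dot v v.
Proof.
have [v0|vpos] := eqVneq (dot v v) 0.
  by rewrite v0 mulr0 (dot0_eq _ v0) [dot u 0]/dot big1 ?expr0n //= => i _; rewrite mxE mulr0.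
have H := dot_ge0 (dot v v *: u - dot u v *: v).
rewrite !(dotBl, dotBr, dotZl, dotZr) (dotC v u) in H.
have vp : 0 < dot v v by rewrite lt_def vpos dot_ge0.
have : 0 <= dot v v * (dot v v * dot u u - dot u v ^+ 2).
  by move: H; rewrite (_ : dot u v * (dot v v * dot u v - dot u v * dot v v) = 0); [rewrite subr0 expr2|ring].
by rewrite pmulr_rge0 // subr_ge0 mulrC.
Qed.

Lemma CS u v : `|dot u v| <= enorm u * enorm v.
Proof.
rewrite !enormE -sqrtrM ?dot_ge0 // -(sqrtr_sqr (dot u v)).
by rewrite ler_sqrt ?CS_sq // mulr_ge0 // dot_ge0.
Qed.

Lemma dot_le u v : dot u v <= enorm u * enorm v.
Proof. exact: le_trans (ler_norm _) (CS u v). Qed.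

Lemma dot_ge u v : - (enorm u * enorm v) <= dot u v.
Proof. by rewrite lerNl -dotNl -(enormN u) dot_le. Qed.

Lemma enormD u v : enorm (u + v) <= enorm u + enorm v.
Proof.
rewrite -(ler_pXn2r (_ : (0 < 2)%N)) ?nnegrE ?addr_ge0 ?enorm_ge0 //.
rewrite enorm_sq dotDl !dotDr (dotC v u) sqrrD !enorm_sq.
have := dot_le u v; lra.
Qed.

Lemma enorm_tri u v w : enorm (u - w) <= enorm (u - v) + enorm (v - w).
Proof. by rewrite (_ : u - w = (u - v) + (v - w)) ?enormD // addrA subrK. Qed.

Lemma entry_le u i : `|u ord0 i| <= enorm u.
Proof.
rewrite enormE -(sqrtr_sqr (u ord0 i)) ler_sqrt ?dot_ge0 //.
rewrite /dot (bigD1 i) //= expr2 lerDl; apply: sumr_ge0 => j _; by rewrite -expr2 sqr_ge0.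
Qed.

Lemma mxnorm_le_enorm u : `|u| <= enorm u.
Proof.
rewrite [X in X <= _]mx_normrE; apply: bigmax_le => //; first exact: enorm_ge0.
by move=> [i j] _ /=; rewrite (ord1 i); exact: entry_le.
Qed.

Lemma enorm_le_mxnorm u : enorm u <= n.+1%:R * `|u|.
Proof.
have c0 : 0 <= n.+1%:R * `|u| by rewrite mulr_ge0.
rewrite enormE -(ger0_norm c0) -(sqrtr_sqr (n.+1%:R * `|u|)) ler_sqrt ?sqr_ge0 //.
have Hi : forall i, u ord0 i * u ord0 i <= `|u| ^+ 2.
  move=> i; rewrite -expr2 -real_normK ?num_real // ler_pXn2r ?nnegrE //.
  rewrite [X in _ <= X]mx_normrE; exact: (le_bigmax _ (fun ij => `|u ij.1 ij.2|) (ord0, i)).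
apply: le_trans (ler_sum _ (fun i _ => Hi i)) _.
rewrite sumr_const card_ord exprMn -[_ *+ n]mulr_natl.
apply: ler_wpM2r; first exact: sqr_ge0.
rewrite -natrX ler_nat expnS; apply: leq_trans (leqnSn n) _.
by rewrite -[X in (X <= _)%N]muln1 leq_mul2l expn_gt0.
Qed.

End Norms.

Lemma ev_of (P : nat -> Prop) N : (forall k, (N <= k)%N -> P k) -> \forall k \near \oo, P k.
Proof. move=> H; exists N => //. Qed.
Lemma of_ev (P : nat -> Prop) : (\forall k \near \oo, P k) -> exists N, forall k, (N <= k)%N -> P k.
Proof. move=> [N _ H]; exists N => k Hk; exact: H. Qed.

Lemma cvg_of (K : realType) (V : pseudoMetricNormedZmodType K) (u : nat -> V) p :
  (forall e, 0 < e -> exists N, forall k, (N <= k)%N -> `|p - u k| < e) -> u @ \oo --> p.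
Proof. move=> H; apply/cvgrPdist_lt => e e0; have [N HN] := H e e0; exact: ev_of HN. Qed.

Lemma of_cvg (K : realType) (V : pseudoMetricNormedZmodType K) (u : nat -> V) p :
  u @ \oo --> p -> (forall e, 0 < e -> exists N, forall k, (N <= k)%N -> `|p - u k| < e).
Proof. by move=> /cvgrPdist_lt H e e0; apply: of_ev; apply: H. Qed.

Lemma geom_small (K : realType) (q e : K) : 0 <= q < 1 -> 0 < e -> exists m, q ^+ m < e.
Proof.
move=> /andP[q0 q1] e0.
have := @cvg_expr K q; rewrite ger0_norm // => /(_ q1) /of_cvg /(_ e e0) [N HN].
by exists N; have := HN N (leqnn N); rewrite sub0r normrN ger0_norm // exprn_ge0.
Qed.

Section Topo.
Context {R : realType} {n : nat}.
Implicit Types u v w p y z : 'rV[R]_n.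

Lemma nbhs_enorm p (S : set 'rV[R]_n) :
  nbhs p S <-> exists2 e, 0 < e & forall y, enorm (y - p) < e -> S y.
Proof.
split.
  move=> /nbhs_ballP [e e0 He]; exists e => // y Hy; apply: He.
  rewrite -ball_normE /ball_ /=; apply: le_lt_trans (mxnorm_le_enorm _) _.
  by rewrite enormB.
move=> [e e0 He]; apply/nbhs_ballP; exists (e / n.+1%:R).
  by rewrite /= divr_gt0 // ltr0n.
move=> y; rewrite -ball_normE /ball_ /= => Hy; apply: He.
apply: le_lt_trans (enorm_le_mxnorm _) _.
by rewrite -opprB normrN mulrC -ltr_pdivlMr.
Qed.

Lemma closed_to (C : set 'rV[R]_n) : closed C ->
  forall y, (forall e, 0 < e -> exists z, C z /\ enorm (z - y) < e) -> C y.
Proof.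
move=> cC y H; apply: cC => B /nbhs_enorm [e e0 He].
have [z [Cz Hz]] := H e e0; exists z; split => //; exact: He.
Qed.

Lemma closed_of (C : set 'rV[R]_n) :
  (forall y, (forall e, 0 < e -> exists z, C z /\ enorm (z - y) < e) -> C y) -> closed C.
Proof.
move=> H y Hy; apply: H => e e0.
have [z [Cz Bz]] := Hy _ (proj2 (nbhs_enorm y [set z | enorm (z - y) < e]) (ex_intro2 _ _ e e0 (fun _ h => h))).
by exists z.
Qed.

Lemma open_to (C : set 'rV[R]_n) y : open C -> C y ->
  exists2 e, 0 < e & forall z, enorm (z - y) < e -> C z.
Proof. by move=> oC Cy; apply/nbhs_enorm; exact: oC. Qed.

Lemma bounded_of (A : set 'rV[R]_n) M : (forall y, A y -> enorm y <= M) -> bounded_set A.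
Proof.
move=> H; exists M; split; first exact: num_real.
move=> M' HM' y Ay /=; apply: le_trans (mxnorm_le_enorm _) _.
exact: le_trans (H _ Ay) (ltW HM').
Qed.

Lemma cvg_enorm (u : nat -> 'rV[R]_n) p :
  (forall e, 0 < e -> exists N, forall k, (N <= k)%N -> enorm (u k - p) < e) -> u @ \oo --> p.
Proof.
move=> H; apply: cvg_of => e e0; have [N HN] := H e e0; exists N => k Hk.
by rewrite -normrN opprB; apply: le_lt_trans (mxnorm_le_enorm _) (HN k Hk).
Qed.

Lemma cont_enorm (h : 'rV[R]_n -> 'rV[R]_n) p : {for p, continuous h} ->
  forall e, 0 < e -> exists2 d, 0 < d & forall y, enorm (y - p) < d -> enorm (h y - h p) < e.
Proof.
move=> hc e e0.
have : nbhs (h p) [set z | enorm (z - h p) < e].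
  by apply/nbhs_enorm; exists e.
by move=> /hc /nbhs_enorm [d d0 Hd]; exists d.
Qed.

Lemma BW (u : nat -> 'rV[R]_n) (P : nat -> Prop) M :
  (forall N, exists k, (N <= k)%N /\ P k) -> (forall k, P k -> enorm (u k) <= M) ->
  exists xs, forall e, 0 < e -> forall N, exists k, [/\ (N <= k)%N, P k & enorm (u k - xs) < e].
Proof.
move=> Hinf Hb.
pose phi N := proj1_sig (cid (Hinf N)).
have phiP N : (N <= phi N)%N /\ P (phi N) := proj2_sig (cid (Hinf N)).
pose A := [set y : 'rV[R]_n | enorm y <= M].
have cA : compact A.
  apply: bounded_closed_compact; first by apply: (@bounded_of _ M).
  apply: closed_of => y Hy; rewrite /A /=.
  apply/ler_addgt0Pr => e e0; have [z [Az Hz]] := Hy e e0.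
  have := enorm_tri y z 0; rewrite !subr0 => H.
  rewrite enormB in H; rewrite /A /= in Az; apply: le_trans H _; rewrite addrC; apply: lerD => //; exact: ltW.
pose F := fmap (fun N => u (phi N)) \oo.
have FF : ProperFilter F by apply: fmap_proper_filter.
have FA : F A by apply: (@ev_of _ 0%N) => k _; apply: Hb; exact: (phiP k).2.
have [xs [_ Hxs]] := cA F FF FA.
exists xs => e e0 N.
have F0 : F [set y | exists k, (N <= k)%N /\ y = u (phi k)].
  by apply: (@ev_of _ N) => k Hk; exists k.
have B0 : nbhs xs [set y | enorm (y - xs) < e] by apply/nbhs_enorm; exists e.
have [y [[k [Hk ->]] Hy]] := Hxs _ _ F0 B0.
exists (phi k); split => //; [exact: leq_trans Hk (phiP k).1 | exact: (phiP k).2].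
Qed.

End Topo.

Section Deriv.
Context {R : realType} {n : nat}.
Variable f : 'rV[R]_n -> R.
Hypothesis hf : forall x, differentiable f x.

Lemma grad_dot x v : derive f x v = dot (grad f x) v.
Proof.
rewrite deriveE // {1}(row_sum_delta v) linear_sum /dot; apply: eq_bigr => j _.
by rewrite linearZ /= mxE -deriveE // mulrC.
Qed.

Lemma mvt_line x d s : 0 < s ->
  exists2 c, 0 < c < s & f (x + s *: d) - f x = s * dot (grad f (x + c *: d)) d.
Proof.
move=> s0.
pose h := fun s : R => f (x + s *: d).
have E : forall s, (fun u : R => u^-1 *: ((h \o shift s) (u *: 1) - h s)) =
   (fun u => u^-1 *: ((f \o shift (x + s *: d)) (u *: d) - f (x + s *: d))).
  move=> s'; apply/funext => u /=; rewrite /h; congr (_ *: (f _ - _)).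
  by rewrite [u *: 1]mulr1 scalerDl addrCA addrC.
have hd : forall s, derivable h s 1 by move=> s'; rewrite /derivable E; exact: diff_derivable.
have hD : forall s, derive h s 1 = dot (grad f (x + s *: d)) d.
  by move=> s'; rewrite /derive E -grad_dot.
have := @MVT R h (fun s => dot (grad f (x + s *: d)) d) 0 s s0.
case.
- move=> c _; apply: DeriveDef; [exact: hd | exact: hD].
- by apply: derivable_within_continuous => c _; exact: hd.
move=> c; rewrite in_itv /= => Hc; rewrite /h scale0r addr0 subr0 => ->.
by exists c => //; rewrite mulrC.
Qed.

End Deriv.

Section Limits.
Context {R : realType} {n : nat}.
Variable x : nat -> 'rV[R]_n.

Lemma accum_eclosed y : (forall e, 0 < e -> exists z, accum_pt x z /\ enorm (z - y) < e) ->
  accum_pt x y.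
Proof.
move=> H e e0 N.
have e2 : 0 < e / 2 by rewrite divr_gt0.
have [z [Hz Hzy]] := H _ e2; have [k [Nk Hk]] := Hz _ e2 N.
exists k; split => //; apply: le_lt_trans (enorm_tri _ z _) _.
by rewrite [e]splitr; apply: ltrD.
Qed.

Lemma accum_bound M : (forall k, enorm (x k) <= M) -> forall y, accum_pt x y -> enorm y <= M.
Proof.
move=> Hb y Hy; apply/ler_addgt0Pr => e e0.
have [k [_ Hk]] := Hy e e0 0%N.
have := enorm_tri y (x k) 0; rewrite !subr0 enormB => T.
by apply: le_trans T _; rewrite addrC; apply: lerD; [exact: Hb | exact: ltW].
Qed.

Lemma small_inv e : 0 < e -> exists N, forall k, (N <= k)%N -> (k.+1%:R)^-1 < e :> R.
Proof.
move=> e0; have b0 : 0 <= e^-1 by rewrite invr_ge0 ltW.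
exists (Num.Def.archi_bound e^-1) => k Hk.
have H := archi_boundP b0.
have H2 : e^-1 < k.+1%:R.
  apply: lt_le_trans H _; rewrite ler_nat; exact: leq_trans Hk (leqnSn _).
by rewrite -(invrK e) ltf_pV2 // ?posrE ?invr_gt0 // ltr0n.
Qed.

Lemma subseq_accum (P : nat -> Prop) y :
  (forall e, 0 < e -> forall N, exists k, [/\ (N <= k)%N, P k & enorm (x k - y) < e]) ->
  accum_pt x y.
Proof. by move=> H e e0 N; have [k [Nk _ Hk]] := H e e0 N; exists k. Qed.

Hypothesis Hst : forall e, 0 < e -> exists N, forall k, (N <= k)%N -> enorm (x k.+1 - x k) < e.

Lemma isolated_cvg xs : accum_pt x xs ->
  (exists2 e : R, 0 < e & forall y, accum_pt x y -> enorm (y - xs) < e -> y = xs) ->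
  x @ \oo --> xs.
Proof.
move=> Hacc [e e0 Hiso]; apply: cvg_enorm => eps eps0; apply: NNPP => Hn.
have Hfar : forall N, exists k, (N <= k)%N /\ eps <= enorm (x k - xs).
  move=> N; apply: NNPP => H; apply: Hn; exists N => k Nk; rewrite ltNge; apply/negP => H2.
  by apply: H; exists k.
pose del := Num.min eps (e / 2).
have del0 : 0 < del by rewrite lt_min eps0 divr_gt0.
have dle : del <= eps by rewrite ge_min lexx.
have dle2 : del <= e / 2 by rewrite ge_min lexx orbT.
have de : del < e by apply: le_lt_trans dle2 _; rewrite ltr_pdivrMr // ltr_pMr // ltr1n.
have [N0 HN0] := Hst _ (divr_gt0 del0 (ltr0Sn _ 3)).
pose P k := del / 2 <= enorm (x k - xs) <= del.
have Hinf : forall N, exists k, (N <= k)%N /\ P k.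
  move=> N; have [k1 [Hk1 Hx1]] := Hacc _ (divr_gt0 del0 (ltr0Sn _ 1)) (maxn N N0).
  have [k2 [Hk2 Hx2]] := Hfar k1.
  apply: NNPP => HnP.
  have Hall : forall j, enorm (x (j + k1) - xs) < del / 2.
    elim=> [|j IH] //; rewrite addSn.
    have Hs := HN0 (j + k1)%N (leq_trans (leq_maxr _ _) (leq_trans Hk1 (leq_addl _ _))).
    have T := enorm_tri (x (j + k1).+1) (x (j + k1)) xs.
    have Hle : enorm (x (j + k1).+1 - xs) <= del.
      apply: le_trans T _; apply: ltW.
      have : del / 4 + del / 2 <= del.
        by lra.
      move=> H4; apply: lt_le_trans H4; exact: ltrD.
    rewrite ltNge; apply/negP => Hge; apply: HnP; exists (j + k1).+1; split.
      by apply: leq_trans (leq_trans (leq_maxl _ _) Hk1) _; rewrite -addSn leq_addl.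
    by rewrite /P Hge Hle.
  have := Hall (k2 - k1)%N; rewrite subnK // => H.
  have : del / 2 < del by rewrite ltr_pdivrMr // ltr_pMr // ltr1n.
  move=> H'; have := le_trans dle Hx2; lra.
have Hbd : forall k, P k -> enorm (x k) <= enorm xs + del.
  move=> k /andP[_ Hk]; have := enorm_tri (x k) xs 0; rewrite !subr0 => T.
  by apply: le_trans T _; rewrite addrC lerD.
have [y Hy] := @BW R n x P _ Hinf Hbd.
have Hyacc : accum_pt x y := subseq_accum _ _ Hy.
have Hyle : enorm (y - xs) <= del.
  apply/ler_addgt0Pr => e' e'0; have [k [_ /andP[_ Pk] Hk]] := Hy e' e'0 0%N.
  have T := enorm_tri y (x k) xs; rewrite enormB in Hk.
  by apply: le_trans T _; rewrite addrC; apply: lerD => //; exact: ltW.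
have Hyge : del / 2 <= enorm (y - xs).
  apply/ler_addgt0Pr => e' e'0; have [k [_ /andP[Pk _] Hk]] := Hy e' e'0 0%N.
  have T := enorm_tri (x k) y xs.
  apply: le_trans Pk _; apply: le_trans T _; rewrite addrC; apply: lerD => //; exact: ltW.
have := Hiso y Hyacc (le_lt_trans Hyle de) => Hyx.
move: Hyge; rewrite Hyx subrr enorm0; have : 0 < del / 2 by rewrite divr_gt0.
lra.
Qed.

Lemma accum_compact M : (forall k, enorm (x k) <= M) -> compact (accum_set x).
Proof.
move=> Hb; apply: bounded_closed_compact.
  by apply: (@bounded_of R n _ M) => y Hy; exact: accum_bound _ Hb y Hy.
by apply: closed_of => y Hy; apply: accum_eclosed.
Qed.

Lemma accum_nonempty M : (forall k, enorm (x k) <= M) -> accum_set x !=set0.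
Proof.
move=> Hb; have [y Hy] := @BW R n x (fun _ => True) M
  (fun N => ex_intro _ N (conj (leqnn N) I)) (fun k _ => Hb k).
by exists y; exact: subseq_accum _ _ Hy.
Qed.

Lemma propagate (S : nat -> Prop) K : (forall k, (K <= k)%N -> S k -> S k.+1) ->
  forall k, (K <= k)%N -> S k -> forall j, (k <= j)%N -> S j.
Proof.
move=> H k Kk Sk j /subnK <-; elim: (j - k)%N => [|i IH] //.
by rewrite addSn; apply: H => //; apply: leq_trans Kk (leq_addl _ _).
Qed.

Lemma sep_arith (eta a b c : R) : 0 < eta -> 3 * eta <= a -> a <= b + c -> b < eta -> c < eta -> False.
Proof. move=> *; lra. Qed.

Lemma sep_arith3 (eta a b c e : R) : 0 < eta -> 3 * eta <= a -> a <= b + (c + e) ->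
   b < eta -> c < eta -> e < eta -> False.
Proof. move=> *; lra. Qed.

Lemma accum_connected M : (forall k, enorm (x k) <= M) -> connected (accum_set x).
Proof.
move=> Hb B [b Bb] [C1 oC1 EB1] [C2 cC2 EB2].
set A := accum_set x.
have BA : forall z, B z -> A z by move=> z; rewrite EB1 => -[].
apply: NNPP => Hne.
have [a [Aa nBa]] : exists a, A a /\ ~ B a.
  apply: NNPP => H; apply: Hne; apply/seteqP; split => [z /BA //|z Az].
  by apply: NNPP => nb; apply: H; exists z.
pose F2 := fun z => A z /\ ~ B z.
have cl1 : forall y, (forall e, 0 < e -> exists z, B z /\ enorm (z - y) < e) -> B y.
  move=> y Hy.
  have Ay : A y.
    by apply: accum_eclosed => e e0; have [z [Bz Hz]] := Hy e e0; exists z; split => //; exact: BA.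
  have C2y : C2 y.
    apply: (closed_to _ cC2) => e e0; have [z [Bz Hz]] := Hy e e0; exists z; split => //.
    by move: Bz; rewrite EB2 => -[].
  by rewrite EB2.
have cl2 : forall y, (forall e, 0 < e -> exists z, F2 z /\ enorm (z - y) < e) -> F2 y.
  move=> y Hy.
  have Ay : A y.
    by apply: accum_eclosed => e e0; have [z [[Az _] Hz]] := Hy e e0; exists z.
  split => // By.
  have C1y : C1 y by move: By; rewrite EB1 => -[].
  have [e e0 He] := open_to _ _ oC1 C1y.
  have [z [[Az nBz] Hz]] := Hy e e0.
  by apply: nBz; rewrite EB1; split => //; exact: He.
have AB : forall z, A z -> B z \/ F2 z.
  by move=> z Az; case: (classic (B z)) => H; [left|right].
have [eta eta0 Hsep] : exists2 eta, 0 < eta & forall u v, B u -> F2 v -> 3 * eta <= enorm (u - v).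
  apply: NNPP => Hns.
  have Hcl : forall k : nat, exists uv : 'rV[R]_n * 'rV[R]_n,
      [/\ B uv.1, F2 uv.2 & enorm (uv.1 - uv.2) < (k.+1%:R)^-1].
    move=> k; apply: NNPP => H; apply: Hns; exists ((k.+1%:R)^-1 / 3).
      by rewrite divr_gt0 // invr_gt0 ltr0n.
    move=> u v Bu Fv; rewrite mulrC divfK //; rewrite leNgt; apply/negP => H'.
    by apply: H; exists (u, v).
  pose W k := proj1_sig (cid (Hcl k)).
  have HW : forall k, [/\ B (W k).1, F2 (W k).2 & enorm ((W k).1 - (W k).2) < (k.+1%:R)^-1].
    by move=> k; exact: proj2_sig (cid (Hcl k)).
  have Ubd : forall k, True -> enorm ((W k).1) <= M.
    by move=> k _; apply: (accum_bound _ Hb); apply: BA; case: (HW k).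
  have [u Hu] := @BW R n (fun k => (W k).1) (fun _ => True) M
     (fun N => ex_intro _ N (conj (leqnn N) I)) Ubd.
  have Bu : B u.
    apply: cl1 => e e0; have [k [_ _ Hk]] := Hu e e0 0%N; exists (W k).1; split => //.
    by case: (HW k).
  have Fu : F2 u.
    apply: cl2 => e e0; have e2 : 0 < e / 2 by rewrite divr_gt0.
    have [N HN] := small_inv _ e2; have [k [Nk _ Hk]] := Hu _ e2 N.
    exists (W k).2; case: (HW k) => _ F Hd; split => //.
    apply: le_lt_trans (enorm_tri _ (W k).1 _) _; rewrite enormB [e]splitr.
    by apply: ltrD => //; apply: lt_trans Hd (HN k Nk).
  by case: Fu.
have [N1 HN1] : exists N, forall k, (N <= k)%N -> exists z, A z /\ enorm (x k - z) < eta.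
  apply: NNPP => H.
  have Hinf : forall N, exists k, (N <= k)%N /\ ~ (exists z, A z /\ enorm (x k - z) < eta).
    move=> N; apply: NNPP => H2; apply: H; exists N => k Nk; apply: NNPP => H3; apply: H2.
    by exists k.
  have [y Hy] := @BW R n x _ M Hinf (fun k _ => Hb k).
  have Ay := subseq_accum _ _ Hy.
  have [k [_ Pk Hk]] := Hy _ eta0 0%N.
  by apply: Pk; exists y.
have [N2 HN2] := Hst _ eta0.
pose K := maxn N1 N2.
pose S1 k := exists z, B z /\ enorm (x k - z) < eta.
pose S2 k := exists z, F2 z /\ enorm (x k - z) < eta.
have Sor : forall k, (K <= k)%N -> S1 k \/ S2 k.
  move=> k Kk; have [z [Az Hz]] := HN1 k (leq_trans (leq_maxl _ _) Kk).
  by case: (AB z Az) => H; [left|right]; exists z.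
have Snot : forall k, S1 k -> S2 k -> False.
  move=> k [z1 [B1 H1]] [z2 [F2' H2]]; have := Hsep _ _ B1 F2'.
  have T := enorm_tri z1 (x k) z2; rewrite (enormB z1 (x k)) in T.
  move=> H; exact: sep_arith _ _ _ _ eta0 H T H1 H2.
have S1prop : forall k, (K <= k)%N -> S1 k -> S1 k.+1.
  move=> k Kk [z1 [B1 H1]]; case: (Sor k.+1 (leq_trans Kk (leqnSn _))) => // [[z2 [F2' H2]]].
  exfalso; have := Hsep _ _ B1 F2'; have Hs := HN2 k (leq_trans (leq_maxr _ _) Kk).
  have T1 := enorm_tri z1 (x k) z2; have T2 := enorm_tri (x k) (x k.+1) z2.
  rewrite (enormB z1 (x k)) in T1; rewrite (enormB (x k) (x k.+1)) in T2.
  move=> H; exact: sep_arith3 _ _ _ _ _ eta0 H (le_trans T1 (lerD (lexx _) T2)) H1 Hs H2.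
have S2prop : forall k, (K <= k)%N -> S2 k -> S2 k.+1.
  move=> k Kk [z2 [F2' H2]]; case: (Sor k.+1 (leq_trans Kk (leqnSn _))) => // [[z1 [B1 H1]]].
  exfalso; have := Hsep _ _ B1 F2'; have Hs := HN2 k (leq_trans (leq_maxr _ _) Kk).
  have T1 := enorm_tri z1 (x k.+1) z2; have T2 := enorm_tri (x k.+1) (x k) z2.
  rewrite (enormB z1 (x k.+1)) in T1.
  move=> H; exact: sep_arith3 _ _ _ _ _ eta0 H (le_trans T1 (lerD (lexx _) T2)) H1 Hs H2.
have [kb [Hkb Hxb]] := BA b Bb eta eta0 K.
have [ka [Hka Hxa]] := Aa eta eta0 K.
have S1b : S1 kb by exists b.
have S2a : S2 ka by exists a.
apply: (Snot (maxn ka kb)).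
  by apply: (propagate _ _ S1prop _ Hkb S1b); rewrite leq_maxr.
by apply: (propagate _ _ S2prop _ Hka S2a); rewrite leq_maxl.
Qed.

End Limits.

Section Algo.
Context {R : realType} {n : nat}.
Variables (f : 'rV[R]_n -> R) (mu theta beta gamma tau : R) (rho : nat -> R)
  (x g d : nat -> 'rV[R]_n) (eps r t : nat -> R).
Hypothesis C1f : C1 f.
Hypothesis Halg : IRG_backtracking f mu theta beta gamma tau rho x g d eps r t.
Variable m : R.
Hypothesis Hm : forall k, m <= f (x k).

Let hf : forall y, differentiable f y := proj1 C1f.
Let hgc : continuous (grad f) := proj2 C1f.

Let A0 : 0 < eps 0%N /\ 0 < r 0%N. Proof. by case: Halg. Qed.
Let Apar : (0 < mu < 1) /\ (0 < theta < 1). Proof. by case: Halg. Qed.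
Let Bpar : [/\ 0 < beta < 1, 0 < gamma < 1 & 0 < tau < 1]. Proof. by case: Halg. Qed.
Let Hk : forall k : nat,
        [/\ enorm (g k - grad f (x k)) <= Order.min (eps k) (rho k),
            (if enorm (g k) <= r k + eps k then
               [/\ r k.+1 = mu * r k, eps k.+1 = theta * eps k & d k = 0]
             else
               [/\ r k.+1 = r k, eps k.+1 = eps k &
                   d k = - ((enorm (g k) - eps k) / enorm (g k)) *: g k]),
            (if d k == 0 then t k = tau
             else exists j : nat,
               [/\ t k = gamma ^+ j, armijo f beta (x k) (d k) (gamma ^+ j) &
                   forall i : nat, (i < j)%N -> ~ armijo f beta (x k) (d k) (gamma ^+ i)])
          & x k.+1 = x k + t k *: d k].
Proof. by case: Halg. Qed.

Let beta0 : 0 < beta. Proof. by case: Bpar => /andP[]. Qed.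
Let beta1 : beta < 1. Proof. by case: Bpar => /andP[]. Qed.
Let gamma0 : 0 < gamma. Proof. by case: Bpar => _ /andP[]. Qed.
Let gamma1 : gamma < 1. Proof. by case: Bpar => _ /andP[]. Qed.
Let tau0 : 0 < tau. Proof. by case: Bpar => _ _ /andP[]. Qed.
Let tau1 : tau < 1. Proof. by case: Bpar => _ _ /andP[]. Qed.
Let mu0 : 0 < mu. Proof. by case: Apar => /andP[]. Qed.
Let mu1 : mu < 1. Proof. by case: Apar => /andP[]. Qed.
Let th0 : 0 < theta. Proof. by case: Apar => _ /andP[]. Qed.
Let th1 : theta < 1. Proof. by case: Apar => _ /andP[]. Qed.

Definition isnull k := enorm (g k) <= r k + eps k.

Lemma pos_er k : 0 < eps k /\ 0 < r k.
Proof.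
elim: k => [|k [IHe IHr]]; first exact: A0.
case: (Hk k) => _; rewrite -/(isnull k); case: ifP => _ [-> -> _] _ _.
  by split; apply: mulr_gt0.
by [].
Qed.

Lemma eps_pos k : 0 < eps k. Proof. exact: (pos_er k).1. Qed.
Lemma r_pos k : 0 < r k. Proof. exact: (pos_er k).2. Qed.

Lemma eps_dec k : eps k.+1 <= eps k.
Proof.
have := eps_pos k; case: (Hk k) => _; case: ifP => _ [_ -> _] _ _ e0 //.
by rewrite ger_pMl // ltW.
Qed.

Lemma r_dec k : r k.+1 <= r k.
Proof.
have := r_pos k; case: (Hk k) => _; case: ifP => _ [-> _ _] _ _ e0 //.
by rewrite ger_pMl // ltW.
Qed.

Lemma null_step k : isnull k -> [/\ r k.+1 = mu * r k, eps k.+1 = theta * eps k & d k = 0].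
Proof. by case: (Hk k) => _; rewrite /isnull; case: ifP. Qed.

Lemma grad_err k : enorm (g k - grad f (x k)) <= eps k.
Proof. by case: (Hk k) => H _ _ _; apply: le_trans H _; rewrite ge_min lexx. Qed.

Lemma nonnull_step k : ~ isnull k ->
  [/\ r k.+1 = r k, eps k.+1 = eps k, r k < enorm (d k), d k != 0 &
      dot (grad f (x k)) (d k) <= - enorm (d k) ^+ 2].
Proof.
rewrite /isnull => Hn; case: (Hk k) => _; case: ifP => // /negbT; rewrite -ltNge => Hlt.
move=> [-> -> Hd] _ _.
have e0 := eps_pos k; have r0 := r_pos k.
set G := g k in Hlt Hd *; set e := eps k in Hlt Hd e0 *.
have G0 : 0 < enorm G by apply: lt_trans Hlt; rewrite addr_gt0.
have lam0 : 0 <= (enorm G - e) / enorm G.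
  by rewrite divr_ge0 ?subr_ge0 ?ltW //; apply: lt_trans Hlt; rewrite ltrDr.
have Hnd : enorm (d k) = enorm G - e.
  rewrite Hd enormZ normrN ger0_norm // divfK //; exact: lt0r_neq0.
split => //.
- by rewrite Hnd ltrBrDr.
- apply/eqP => d0; move: Hnd; rewrite d0 enorm0 => /eqP; rewrite eq_sym subr_eq0 => /eqP E.
  by move: Hlt; rewrite E; lra.
- rewrite Hnd Hd dotZr.
  have E1 : dot (grad f (x k)) G = dot G G - dot (G - grad f (x k)) G.
    by rewrite dotBl opprB addrC subrK.
  have E2 := dot_le (G - grad f (x k)) G.
  have E3 := grad_err k; rewrite -/G -/e in E3.
  have E4 : enorm (G - grad f (x k)) * enorm G <= e * enorm G by rewrite ler_pM2r.
  have E5 : dot (grad f (x k)) G >= enorm G * (enorm G - e).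
    by rewrite E1 -enorm_sq; lra.
  rewrite mulNr lerN2.
  apply: le_trans (ler_wpM2l lam0 E5).
  rewrite mulrA divfK ?expr2 //; exact: lt0r_neq0.
Qed.

Lemma nonnull_dnorm k : ~ isnull k -> enorm (d k) = enorm (g k) - eps k.
Proof.
rewrite /isnull => Hn; case: (Hk k) => _; case: ifP => // /negbT; rewrite -ltNge => Hlt.
move=> [_ _ Hd] _ _.
have e0 := eps_pos k; have r0 := r_pos k.
have G0 : 0 < enorm (g k) by apply: lt_trans Hlt; rewrite addr_gt0.
have lam0 : 0 <= (enorm (g k) - eps k) / enorm (g k).
  by rewrite divr_ge0 ?subr_ge0 ?ltW //; apply: lt_trans Hlt; rewrite ltrDr.
rewrite Hd enormZ normrN ger0_norm // divfK //; exact: lt0r_neq0.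
Qed.

Lemma t_cases k : (d k = 0 /\ t k = tau) \/ (d k != 0 /\ exists j : nat,
   [/\ t k = gamma ^+ j, armijo f beta (x k) (d k) (gamma ^+ j) &
       forall i : nat, (i < j)%N -> ~ armijo f beta (x k) (d k) (gamma ^+ i)]).
Proof.
case: (Hk k) => _ _; case: eqP => [-> -> _|/eqP dn H _]; [by left | by right].
Qed.

Lemma t_pos k : 0 < t k.
Proof. by case: (t_cases k) => [[_ ->]|[_ [j [-> _ _]]]] //; exact: exprn_gt0. Qed.

Lemma t_le1 k : t k <= 1.
Proof.
case: (t_cases k) => [[_ ->]|[_ [j [-> _ _]]]]; first exact: ltW.
by apply: exprn_ile1; apply: ltW.
Qed.

Lemma x_next k : x k.+1 = x k + t k *: d k.
Proof. by case: (Hk k). Qed.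

Lemma descent k : f (x k.+1) <= f (x k) - beta * (t k * enorm (d k) ^+ 2).
Proof.
rewrite x_next; case: (t_cases k) => [[-> _]|[_ [j [-> H _]]]].
  by rewrite scaler0 addr0 enorm0 expr0n /= mulr0 mulr0 subr0.
by move: H; rewrite /armijo mulrA.
Qed.

Lemma step_eq k : enorm (x k.+1 - x k) = t k * enorm (d k).
Proof. by rewrite x_next addrC addKr enormZ ger0_norm // ltW // t_pos. Qed.

Definition a k := t k * enorm (d k) ^+ 2.

Lemma a_ge0 k : 0 <= a k.
Proof. by rewrite mulr_ge0 ?sqr_ge0 // ltW // t_pos. Qed.

Lemma fdec1 k : f (x k.+1) <= f (x k).
Proof.
apply: le_trans (descent k) _; rewrite gerBl; apply: mulr_ge0; [exact: ltW | exact: a_ge0].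
Qed.

Lemma fdec p q : (p <= q)%N -> f (x q) <= f (x p).
Proof.
move=> /subnK <-; elim: (q - p)%N => [|j IH] //.
by rewrite addSn; apply: le_trans (fdec1 _) IH.
Qed.

Lemma fcauchy e : 0 < e -> exists N, forall p q, (N <= p)%N -> (p <= q)%N -> f (x p) - f (x q) < e.
Proof.
move=> e0; apply: NNPP => Hn.
have Hdrop : forall N, exists p q, [/\ (N <= p)%N, (p <= q)%N & e <= f (x p) - f (x q)].
  move=> N; apply: NNPP => H2; apply: Hn; exists N => p q Np pq.
  rewrite ltNge; apply/negP => H3; apply: H2; by exists p, q.
have Hj : forall j : nat, exists q, f (x q) <= f (x 0%N) - j%:R * e.
  elim=> [|j [q Hq]]; first by exists 0%N; rewrite mul0r subr0.
  have [p [q' [qp pq' He]]] := Hdrop q.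
  exists q'; have := fdec _ _ qp; rewrite -natr1 mulrDl mul1r; lra.
have b0 : 0 <= (f (x 0%N) - m) / e by rewrite divr_ge0 ?subr_ge0 ?Hm // ltW.
have [q Hq] := Hj (Num.Def.archi_bound ((f (x 0%N) - m) / e)).
have := archi_boundP b0; rewrite ltr_pdivrMr // => H.
have := Hm q; lra.
Qed.

Lemma potential c p q : 0 < c -> (p <= q)%N ->
  (forall k, (p <= k)%N -> (k < q)%N -> d k = 0 \/ c <= enorm (d k)) ->
  enorm (x q - x p) <= (f (x p) - f (x q)) / (beta * c).
Proof.
move=> c0 /subnK <-; elim: (q - p)%N => [|j IH] H.
  by rewrite add0n subrr enorm0 subrr mul0r.
have bc : 0 < beta * c by rewrite mulr_gt0.
rewrite addSn.
have IH' := IH (fun k h1 h2 => H k h1 (ltn_trans h2 (ltnSn _))).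
have Hs : enorm (x (j + p).+1 - x (j + p)) <= (f (x (j + p)) - f (x (j + p).+1)) / (beta * c).
  rewrite ler_pdivlMr // step_eq.
  have D := descent (j + p).
  have t0 := t_pos (j + p).
  case: (H (j + p)%N (leq_addl _ _) (ltnSn _)) => [->|Hc].
    by rewrite enorm0 mulr0 mul0r subr_ge0 fdec1.
  have dn0 : 0 <= enorm (d (j + p)) by exact: enorm_ge0.
  have : t (j + p) * enorm (d (j + p)) * (beta * c) <= beta * (t (j + p) * enorm (d (j + p)) ^+ 2).
    rewrite (_ : _ * (beta * c) = beta * (t (j + p) * enorm (d (j + p)) * c)); last by ring.
    rewrite ler_pM2l // expr2 mulrA; apply: ler_wpM2l => //.
    by rewrite mulr_ge0 // ltW.
  lra.
apply: le_trans (enorm_tri _ (x (j + p)) _) _.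
apply: le_trans (lerD Hs IH') _.
by rewrite -mulrDl addrC addrA subrK.
Qed.

Lemma a_to0 e : 0 < e -> exists N, forall k, (N <= k)%N -> a k < e.
Proof.
move=> e0; have [N HN] := fcauchy _ (mulr_gt0 beta0 e0).
exists N => k Nk; have := HN k k.+1 Nk (leqnSn k); have := descent k; rewrite /a.
move=> D H; rewrite -(ltr_pM2l beta0); lra.
Qed.

Lemma step_to0 e : 0 < e -> exists N, forall k, (N <= k)%N -> enorm (x k.+1 - x k) < e.
Proof.
move=> e0; have [N HN] := a_to0 _ (mulr_gt0 e0 e0).
exists N => k Nk; rewrite step_eq; have := HN k Nk; rewrite /a => H.
have t0 := t_pos k; have t1 := t_le1 k; have dn := enorm_ge0 (d k).
have [He|He] := ltP (enorm (d k)) e.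
  by apply: le_lt_trans He; rewrite ler_piMl.
have : t k * enorm (d k) * e < e * e.
  apply: le_lt_trans H; rewrite expr2 mulrA ler_wpM2l // mulr_ge0 // ltW //.
by rewrite ltr_pM2r.
Qed.

Lemma fin_ineq (b D rr X Y Z e : R) : b < 1 -> 0 < D -> - b * D ^+ 2 < X -> X - Y <= Z ->
  Y <= - D ^+ 2 -> Z <= (e + e) * D -> e + e = (1 - b) * rr -> D < rr.
Proof.
move=> b1 D0 H1 H2 H3 H4 H5.
have H6 : (1 - b) * (D * D) < (1 - b) * (rr * D).
  rewrite [X in _ < X]mulrA -H5 -expr2; lra.
by move: H6; rewrite ltr_pM2l ?subr_gt0 // ltr_pM2r.
Qed.

Lemma inf_null N : exists k, (N <= k)%N /\ isnull k.
Proof.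
apply: NNPP => Hn.
have Hnn : forall k, (N <= k)%N -> ~ isnull k.
  by move=> k Nk Hk'; apply: Hn; exists k.
pose rr := r N.
have rr0 : 0 < rr := r_pos N.
have rconst : forall j, r (j + N)%N = rr.
  elim=> [|j IH] //; rewrite addSn; case: (nonnull_step (j + N)).
    by apply: Hnn; rewrite leq_addl.
  by move=> -> *.
have dbig : forall k, (N <= k)%N -> rr < enorm (d k) /\ d k != 0.
  move=> k Nk; case: (nonnull_step k (Hnn k Nk)) => _ _ H1 H2 _.
  by split => //; rewrite -(rconst (k - N)%N) subnK.
have bc : 0 < beta * rr by rewrite mulr_gt0.
have Hbd : forall k, (N <= k)%N -> enorm (x k) <= enorm (x N) + (f (x N) - m) / (beta * rr).
  move=> k Nk; have := potential rr N k rr0 Nk (fun j h1 _ => or_intror (ltW (dbig j h1).1)).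
  move=> H; have := enorm_tri (x k) (x N) 0; rewrite !subr0 => T.
  apply: le_trans T _; rewrite addrC; apply: lerD => //.
  apply: le_trans H _; rewrite ler_pM2r ?invr_gt0 //; have := Hm k; lra.
have [xb Hxb] := @BW R n x (fun k => (N <= k)%N) _ (fun N' => ex_intro _ (maxn N N') (conj (leq_maxr _ _) (leq_maxl N N'))) Hbd.
pose e := (1 - beta) * rr / 2.
have e0 : 0 < e by rewrite /e divr_gt0 // mulr_gt0 // subr_gt0.
have [del del0 Hdel] := @cont_enorm R n (grad f) xb (hgc xb) e e0.
have [N1 HN1] := a_to0 _ (mulr_gt0 gamma0 (mulr_gt0 rr0 rr0)).
have [N2 HN2] := step_to0 _ (mulr_gt0 gamma0 (divr_gt0 del0 (ltr0Sn _ 1))).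
have [k [Hk1 Nk Hk2]] := Hxb _ (divr_gt0 del0 (ltr0Sn _ 1)) (maxn N1 N2).
have k1 : (N1 <= k)%N by apply: leq_trans Hk1; rewrite leq_maxl.
have k2 : (N2 <= k)%N by apply: leq_trans Hk1; rewrite leq_maxr.
case: (nonnull_step k (Hnn k Nk)) => _ _ _ dn0 Hdot.
have [Hr _] := dbig k Nk.
set D := enorm (d k) in Hr Hdot.
have D0 : 0 < D by apply: lt_trans Hr.
case: (t_cases k) => [[d0 _]|[_ [j [tj _ Hfail]]]]; first by move: dn0; rewrite d0 eqxx.
have tk0 := t_pos k.
have tg : t k < gamma.
  have := HN1 k k1; rewrite /a -/D => H.
  have : t k * (rr * rr) < gamma * (rr * rr).
    apply: le_lt_trans H; apply: ler_wpM2l; first exact: ltW.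
    by rewrite expr2; apply: ler_pM; rewrite ?ltW.
  by rewrite ltr_pM2r // mulr_gt0.
case: j tj Hfail => [|i] tj Hfail; first by move: tg; rewrite tj expr0; have := gamma1; lra.
pose s := gamma ^+ i.
have s0 : 0 < s by apply: exprn_gt0.
have ts : t k = gamma * s by rewrite tj exprS.
have Hna := Hfail i (ltnSn i); rewrite /armijo -/s in Hna.
have Hna' : f (x k) - beta * s * D ^+ 2 < f (x k + s *: d k) by rewrite ltNge; apply/negP.
have [c /andP[c0 cs] Hmvt] := @mvt_line R n f hf (x k) (d k) s s0.
set xi := x k + c *: d k in Hmvt.
have Hdotxi : - beta * D ^+ 2 < dot (grad f xi) (d k).
  rewrite -(ltr_pM2l s0); move: Hna'; rewrite -(ltrD2r (- f (x k))) Hmvt; lra.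
have Hst := HN2 k k2; rewrite step_eq -/D ts in Hst.
have sD : s * D < del / 2.
  by rewrite -(ltr_pM2l gamma0) mulrA.
have Hxi : enorm (xi - xb) < del.
  rewrite /xi (_ : x k + c *: d k - xb = (x k - xb) + c *: d k); last by rewrite addrAC.
  apply: le_lt_trans (enormD _ _) _.
  rewrite enormZ ger0_norm ?(ltW c0) //.
  have : c * D <= s * D by rewrite ler_pM2r // ltW.
  rewrite -/D => H; rewrite [del]splitr; apply: ltrD => //; exact: le_lt_trans H sD.
have Hxk : enorm (x k - xb) < del.
  by apply: lt_trans Hk2 _; rewrite ltr_pdivrMr // ltr_pMr // ltr1n.
have G1 := Hdel _ Hxi; have G2 := Hdel _ Hxk.
have G3 : enorm (grad f xi - grad f (x k)) < e + e.
  apply: le_lt_trans (enorm_tri _ (grad f xb) _) _; rewrite (enormB (grad f xb)).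
  exact: ltrD.
have G4 := dot_le (grad f xi - grad f (x k)) (d k); rewrite dotBl -/D in G4.
have G5 : enorm (grad f xi - grad f (x k)) * D <= (e + e) * D by rewrite ler_pM2r // ltW.
have E2 : e + e = (1 - beta) * rr by rewrite /e -splitr.
have := @fin_ineq beta D rr _ _ _ e beta1 D0 Hdotxi G4 Hdot G5 E2.
by rewrite ltNge (ltW Hr).
Qed.

Lemma to0 (u : nat -> R) (q : R) : 0 <= q < 1 -> (forall k, 0 < u k) ->
  (forall k, u k.+1 <= u k) -> (forall N, exists k, (N <= k)%N /\ u k.+1 = q * u k) ->
  u @ \oo --> 0.
Proof.
move=> /andP[q0 q1] upos udec Hinf.
have unon : forall p q', (p <= q')%N -> u q' <= u p.
  move=> p q' /subnK <-; elim: (q' - p)%N => [|j IH] //.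
  by rewrite addSn; apply: le_trans (udec _) IH.
have Hs : forall j, exists N, u N <= q ^+ j * u 0%N.
  elim=> [|j [N HN]]; first by exists 0%N; rewrite expr0 mul1r.
  have [k [Nk Hk']] := Hinf N; exists k.+1; rewrite Hk' exprS -mulrA.
  by apply: ler_wpM2l => //; apply: le_trans (unon _ _ Nk) HN.
apply: cvg_of => e e0.
have [j Hj] := @geom_small R q (e / u 0%N) (ltac:(by rewrite q0 q1)) (divr_gt0 e0 (upos 0%N)).
have [N HN] := Hs j; exists N => k Nk.
rewrite sub0r normrN ger0_norm ?ltW //.
apply: le_lt_trans (unon _ _ Nk) _; apply: le_lt_trans HN _.
by rewrite -ltr_pdivlMr.
Qed.

Lemma eps_to0 : eps @ \oo --> 0.
Proof.
apply: (@to0 _ theta); [by rewrite ltW ?th0 ?th1 | exact: eps_pos | exact: eps_dec |].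
by move=> N; have [k [Nk Hn]] := inf_null N; exists k; split => //; case: (null_step _ Hn).
Qed.

Lemma r_to0 : r @ \oo --> 0.
Proof.
apply: (@to0 _ mu); [by rewrite ltW ?mu0 ?mu1 | exact: r_pos | exact: r_dec |].
by move=> N; have [k [Nk Hn]] := inf_null N; exists k; split => //; case: (null_step _ Hn).
Qed.

Lemma ev_small (u : nat -> R) : u @ \oo --> 0 -> (forall k, 0 < u k) ->
  forall e, 0 < e -> exists N, forall k, (N <= k)%N -> u k < e.
Proof.
move=> /of_cvg H upos e e0; have [N HN] := H e e0; exists N => k Nk.
by have := HN k Nk; rewrite sub0r normrN ger0_norm // ltW.
Qed.

Lemma arith1 (nG a ngx b ngk e rr c : R) : nG = 4 * c -> a < c -> nG <= a + ngx ->
  ngx <= b + ngk -> b <= e -> e < c -> rr < c -> rr + e < ngk /\ c <= ngk - e.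
Proof. move=> *; split; lra. Qed.

Lemma stationary xs : accum_pt x xs -> grad f xs = 0.
Proof.
move=> Hacc; apply: NNPP => HG.
set G := grad f xs in HG.
have G0 : 0 < enorm G.
  by rewrite lt_def enorm_ge0 andbT; apply/eqP => /enorm_eq0.
clear HG.
pose c := enorm G / 4.
have c0 : 0 < c by rewrite divr_gt0.
have [del del0 Hdel] := @cont_enorm R n (grad f) xs (hgc xs) c c0.
have [N1 HN1] := ev_small _ eps_to0 eps_pos c c0.
have [N2 HN2] := ev_small _ r_to0 r_pos c c0.
pose K := maxn N1 N2.
have Hin : forall k, (K <= k)%N -> enorm (x k - xs) < del -> ~ isnull k /\ c <= enorm (d k).
  move=> k Kk Hx.
  have e1 := HN1 k (leq_trans (leq_maxl _ _) Kk).
  have e2 := HN2 k (leq_trans (leq_maxr _ _) Kk).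
  have H1 := Hdel _ Hx.
  have T1 := enorm_tri G (grad f (x k)) 0; rewrite !subr0 in T1.
  have T2 := enorm_tri (grad f (x k)) (g k) 0; rewrite !subr0 in T2.
  have T3 := grad_err k; rewrite enormB in T3; rewrite enormB in H1.
  have Hc : enorm G = 4 * c by rewrite /c mulrC divfK.
  have [A1 A2] := arith1 _ _ _ _ _ _ _ _ Hc H1 T1 T2 T3 e1 e2.
  have nn : ~ isnull k by rewrite /isnull => Hn; move: A1; rewrite ltNge Hn.
  by split => //; rewrite nonnull_dnorm.
have b0 : 0 < beta * c by rewrite mulr_gt0.
have [N3 HN3] := fcauchy _ (mulr_gt0 b0 (divr_gt0 del0 (ltr0Sn _ 1))).
have [p [Kp Hp]] := Hacc _ (divr_gt0 del0 (ltr0Sn _ 1)) (maxn K N3).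
have pK : (K <= p)%N by apply: leq_trans Kp; rewrite leq_maxl.
have pN3 : (N3 <= p)%N by apply: leq_trans Kp; rewrite leq_maxr.
have half : del / 2 < del by rewrite ltr_pdivrMr // ltr_pMr // ltr1n.
have Hall : forall j, forall i, (i <= j)%N -> enorm (x (i + p) - xs) < del.
  elim=> [|j IH] i.
    by rewrite leqn0 => /eqP ->; rewrite add0n; apply: lt_trans Hp half.
  rewrite leq_eqVlt => /orP[/eqP ->|]; last by rewrite ltnS; apply: IH.
  have Pot := potential c p (j.+1 + p) c0 (leq_addl _ _).
  have := Pot (fun k h1 h2 => or_intror (Hin k (leq_trans pK h1)
       (ltac:(rewrite -(subnK h1); apply: IH; rewrite -(leq_add2r p) subnK // -ltnS; by rewrite -addSn)) ).2).
  move=> Hpot.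
  have Hf := HN3 p (j.+1 + p) pN3 (leq_addl _ _).
  have : (f (x p) - f (x (j.+1 + p))) / (beta * c) < del / 2.
    by rewrite ltr_pdivrMr // mulrC.
  move=> H2; have T := enorm_tri (x (j.+1 + p)) (x p) xs.
  rewrite [del]splitr; apply: le_lt_trans T _; apply: ltrD => //.
  exact: le_lt_trans Hpot H2.
have [k [Hk1 Hnull]] := inf_null (maxn p K).
have kp : (p <= k)%N by apply: leq_trans Hk1; rewrite leq_maxl.
have kK : (K <= k)%N by apply: leq_trans Hk1; rewrite leq_maxr.
have := Hall (k - p)%N (k - p)%N (leqnn _); rewrite subnK // => Hx.
by case: (Hin k kK Hx).
Qed.

Lemma main_sec :
  [/\ ((forall k, eps k.+1 <= eps k) /\ eps @ \oo --> (0 : R)) /\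
      ((forall k, r k.+1 <= r k) /\ r @ \oo --> (0 : R)),
      (forall xs, accum_pt x xs -> grad f xs = 0),
      ((exists M : R, forall k, enorm (x k) <= M) ->
         [/\ accum_set x !=set0, compact (accum_set x) & connected (accum_set x)])
    & (forall xs, accum_pt x xs ->
         (exists2 e : R, 0 < e & forall y, accum_pt x y -> enorm (y - xs) < e -> y = xs) ->
         x @ \oo --> xs)].
Proof.
split.
- by split; split; [exact: eps_dec | exact: eps_to0 | exact: r_dec | exact: r_to0].
- exact: stationary.
- move=> [M HM]; split.
  + exact: (@accum_nonempty R n x M HM).
  + exact: (@accum_compact R n x M HM).
  + exact: (@accum_connected R n x step_to0 M HM).
- move=> xs Hacc Hiso; exact: (@isolated_cvg R n x step_to0 xs Hacc Hiso).
Qed.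

End Algo.

Theorem mainTheorem10 (R : realType) (n : nat) (f : 'rV[R]_n -> R)
  (mu theta beta gamma tau : R) (rho : nat -> R)
  (x g d : nat -> 'rV[R]_n) (eps r t : nat -> R) :
  C1 f ->
  IRG_backtracking f mu theta beta gamma tau rho x g d eps r t ->
  (exists m : R, forall k, m <= f (x k)) ->
  rho @ \oo --> (0 : R) ->
  [/\ ((forall k, eps k.+1 <= eps k) /\ eps @ \oo --> (0 : R)) /\
      ((forall k, r k.+1 <= r k) /\ r @ \oo --> (0 : R)),
      (forall xs, accum_pt x xs -> grad f xs = 0),
      ((exists M : R, forall k, enorm (x k) <= M) ->
         [/\ accum_set x !=set0, compact (accum_set x) & connected (accum_set x)])
    & (forall xs, accum_pt x xs ->
         (exists2 e : R, 0 < e & forall y, accum_pt x y -> enorm (y - xs) < e -> y = xs) ->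
         x @ \oo --> xs)].
Proof.
move=> C1f Halg [m Hm] _.
exact: (@main_sec R n f mu theta beta gamma tau rho x g d eps r t C1f Halg m Hm).
Qed.
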